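(* Let $f\in\mathcal H_{(d)}$ and nonzero $x,y\in\mathbb C^{n+1}$ with $\operatorname{rank}Df(x)|_{x^\perp}=n$. Then \[\|(Df(x)|_{x^\perp})^{-1}Df(x)|_{y^\perp}\|\le 1+d_P(x,y)\tan\theta_x.\]
   Context: $\mathcal H_{(d)}$: systems $f=(f_1,\dots,f_n)$ of homogeneous complex polynomials in $n+1$ variables. $x^\perp$ is the Hermitian orthogonal complement of $x$; $Df(x)|_{V}$ denotes the restriction of $Df(x):\mathbb C^{n+1}\to\mathbb C^n$ to a subspace $V$; norms are operator norms. $d_P(x,y)=\sin d_R(x,y)$ where $\cos d_R(x,y)=|\langle x,y\rangle|/(\|x\|\|y\|)$, $d_R\in[0,\pi/2]$. When $\operatorname{rank}Df(x)=n$, $\theta_x$ is the angle between the complex lines $\mathbb Cx$ and $\ker Df(x)$ (the angle $\theta\in[0,\pi/2]$ with $\cos\theta=|\langle x,w\rangle|/(\|x\|\|w\|)$ for $0\ne w\in\ker Df(x)$). *)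

(* Defs.v *)
(* The complex numbers are taken to be an arbitrary
   numClosedFieldType C (algebraically closed field with conjugation and
   norm; e.g. algC, or the complex numbers). *)
From HB Require Import structures.
From mathcomp Require Import all_boot all_order all_algebra.
Set Implicit Arguments. Unset Strict Implicit. Unset Printing Implicit Defensive.
Import Order.TTheory GRing.Theory Num.Theory.
Local Open Scope ring_scope.

Definition hdot (C : numClosedFieldType) (m : nat) (u v : 'rV[C]_m) : C :=
  \sum_(k < m) u 0 k * (v 0 k)^*.

Definition vnorm (C : numClosedFieldType) (m : nat) (u : 'rV[C]_m) : C :=
  sqrtC (\sum_(k < m) `|u 0 k| ^+ 2).

(* cos d_R(x,y) = |<x,y>| / (||x|| ||y||) *)
Definition cosR (C : numClosedFieldType) (m : nat) (x y : 'rV[C]_m) : C :=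
  `|hdot x y| / (vnorm x * vnorm y).

Definition sin_of_cos (C : numClosedFieldType) (c : C) : C := sqrtC (1 - c ^+ 2).

(* Projective distance d_P(x,y) = sin d_R(x,y). *)
Definition dP (C : numClosedFieldType) (m : nat) (x y : 'rV[C]_m) : C :=
  sin_of_cos (cosR x y).

(* The orthogonal complement x^perp as the row space of a square matrix:
   x^perp = { v | <v,x> = 0 } = { v | v *m (conj x)^T = 0 }. *)
Definition perp (C : numClosedFieldType) (m : nat) (x : 'rV[C]_m) : 'M[C]_m :=
  kermx (map_mx Num.conj x)^T.

(* Exponent vectors of monomials of degree d in m variables. *)
Definition expo (m d : nat) := {ffun 'I_m -> 'I_d.+1}.
Definition homog_expo (m d : nat) (a : expo m d) : bool :=
  (\sum_(k < m) (a k : nat) == d)%N.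

(* A system f = (f_1..f_n) in H_(d): f_i is homogeneous of degree d i in
   n+1 variables, given by its coefficients c i a on the monomials x^a,
   |a| = d i (coefficients on other exponent vectors are ignored). *)
Definition hsys (C : numClosedFieldType) (n : nat) (d : 'I_n -> nat) :=
  forall i : 'I_n, expo n.+1 (d i) -> C.

Definition hsys_eval (C : numClosedFieldType) (n : nat) (d : 'I_n -> nat)
  (f : hsys C d) (x : 'rV[C]_n.+1) : 'rV[C]_n :=
  \row_(i < n) \sum_(a : expo n.+1 (d i) | homog_expo a)
     f i a * \prod_(l < n.+1) x 0 l ^+ (a l : nat).

(* The derivative Df(x) : C^(n+1) -> C^n, as a matrix acting on row vectors
   (v |-> v *m Df x); entry (k,i) = partial f_i / partial x_k (x). *)
Definition Dsys (C : numClosedFieldType) (n : nat) (d : 'I_n -> nat)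
  (f : hsys C d) (x : 'rV[C]_n.+1) : 'M[C]_(n.+1, n) :=
  \matrix_(k < n.+1, i < n)
    \sum_(a : expo n.+1 (d i) | homog_expo a)
      f i a * (a k : nat)%:R *
      \prod_(l < n.+1) x 0 l ^+ ((a l : nat) - (l == k))%N.

(* Main.v *)
Require Import Defs.
From HB Require Import structures.
From mathcomp Require Import all_boot all_order all_algebra.
From mathcomp Require Import ring lra.
Import Order.TTheory GRing.Theory Num.Theory.
Local Open Scope ring_scope.

Section H.
Context {C : numClosedFieldType} {m : nat}.
Implicit Types u v z p q : 'rV[C]_m.

Lemma hdotDl u v z : hdot (u + v) z = hdot u z + hdot v z.
Proof. by rewrite /hdot -big_split; apply: eq_bigr => k _; rewrite mxE mulrDl. Qed.

Lemma hdotZl a u z : hdot (a *: u) z = a * hdot u z.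
Proof. by rewrite /hdot mulr_sumr; apply: eq_bigr => k _; rewrite mxE mulrA. Qed.

Lemma hdotC u v : hdot v u = (hdot u v)^*.
Proof.
rewrite /hdot rmorph_sum; apply: eq_bigr => k _.
by rewrite rmorphM /= conjCK mulrC.
Qed.

Lemma hdotDr u v z : hdot z (u + v) = hdot z u + hdot z v.
Proof. by rewrite hdotC hdotDl rmorphD /= -!hdotC. Qed.

Lemma hdotZr a u z : hdot z (a *: u) = a^* * hdot z u.
Proof. by rewrite hdotC hdotZl rmorphM /= -!hdotC. Qed.

Lemma hdot0r z : hdot z 0 = 0.
Proof. by rewrite -(scale0r 0) hdotZr rmorph0 mul0r. Qed.

Lemma hdot_ge0 u : 0 <= hdot u u.
Proof. by apply: sumr_ge0 => k _; rewrite -normCK exprn_ge0. Qed.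

Lemma hdot_conj u : (hdot u u)^* = hdot u u.
Proof. exact: geC0_conj (hdot_ge0 u). Qed.

Lemma vnormE u : vnorm u = sqrtC (hdot u u).
Proof. by rewrite /vnorm /hdot; congr sqrtC; apply: eq_bigr => k _; rewrite normCK. Qed.

Lemma vnorm_sq u : vnorm u ^+ 2 = hdot u u.
Proof. by rewrite vnormE sqrtCK. Qed.

Lemma vnorm_ge0 u : 0 <= vnorm u.
Proof. by rewrite vnormE sqrtC_ge0 hdot_ge0. Qed.

Lemma vnorm_from_sq u r : 0 <= r -> r ^+ 2 = hdot u u -> vnorm u = r.
Proof. by move=> r0 e; rewrite vnormE -e sqrCK. Qed.

Lemma hdot_eq0 u : hdot u u = 0 -> u = 0.
Proof.
move=> /psumr_eq0P H; apply/rowP => k; rewrite mxE.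
have /eqP := H (fun k _ => ltac:(by rewrite -normCK exprn_ge0)) k isT.
by rewrite -normCK expf_eq0 /= normr_eq0 => /eqP.
Qed.

Lemma vnorm_gt0 u : u != 0 -> 0 < vnorm u.
Proof.
move=> u0; rewrite lt_def vnorm_ge0 andbT; apply/eqP => e.
by move/eqP: u0; apply; apply: hdot_eq0; rewrite -vnorm_sq e expr0n.
Qed.

Lemma pyth p q : q != 0 ->
  let t := hdot p q / hdot q q in
  hdot (p - t *: q) (p - t *: q) = hdot p p - `|hdot p q| ^+ 2 / hdot q q.
Proof.
move=> q0 t.
have Q0 : hdot q q != 0 by apply/eqP => /hdot_eq0; apply/eqP.
rewrite -scaleNr !(hdotDl, hdotDr, hdotZl, hdotZr) [hdot q p]hdotC normCK /t.
rewrite rmorphN /= fmorph_div /= hdot_conj.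
by field.
Qed.

Lemma CS p q : `|hdot p q| <= vnorm p * vnorm q.
Proof.
have [->|q0] := eqVneq q 0.
  by rewrite hdot0r normr0 mulr_ge0 ?vnorm_ge0.
have Qp : 0 < hdot q q by rewrite -vnorm_sq exprn_gt0 ?vnorm_gt0.
rewrite -(ler_pXn2r (_ : 0 < 2)%N) ?nnegrE ?mulr_ge0 ?vnorm_ge0 //.
have := hdot_ge0 (p - (hdot p q / hdot q q) *: q).
by rewrite pyth // subr_ge0 ler_pdivrMr // exprMn !vnorm_sq.
Qed.

Lemma vnormD p q : vnorm (p + q) <= vnorm p + vnorm q.
Proof.
rewrite -(ler_pXn2r (_ : 0 < 2)%N) ?nnegrE ?addr_ge0 ?vnorm_ge0 //.
rewrite vnorm_sq !(hdotDl, hdotDr) sqrrD !vnorm_sq [hdot q p]hdotC.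
have : 'Re (hdot p q) <= `|hdot p q| by rewrite leif_Re_Creal.
rewrite ReE => H.
have H2 := CS p q.
set g := hdot p q in H H2 *.
have H4 : g + g^* <= 2 * (vnorm p * vnorm q).
  rewrite ler_pdivrMr ?ltr0n // mulrC in H.
  by apply: (le_trans H); rewrite ler_pM2l ?ltr0n.
set P := hdot p p; set Q := hdot q q; set N := vnorm p * vnorm q.
have -> : P + g + (g^* + Q) = (P + Q) + (g + g^*) by ring.
have -> : P + N *+ 2 + Q = (P + Q) + 2 * N by ring.
by rewrite lerD2l.
Qed.

Lemma vnormZ a q : vnorm (a *: q) = `|a| * vnorm q.
Proof.
apply: vnorm_from_sq; first by rewrite mulr_ge0 ?vnorm_ge0.
by rewrite hdotZl hdotZr exprMn vnorm_sq normCK mulrA.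
Qed.
End H.

Lemma aux_decomp (C: numClosedFieldType) (p q r a b H : C) : b != 0 -> H != 0 ->
  p + - a / b * q = p - a / H * r + - a / b * (q - b / H * r).
Proof. by move=> hb hH; field; rewrite hb hH. Qed.

Lemma ker1 (C : numClosedFieldType) n (x w z : 'rV[C]_n.+1) (A : 'M[C]_(n.+1,n)) :
  \rank (perp x *m A) = n -> w != 0 -> w *m A = 0 -> z *m A = 0 ->
  exists a, z = a *: w.
Proof.
move=> rk w0 wA zA.
have rA : \rank A = n.
  by apply/eqP; rewrite eqn_leq rank_leq_col /= -{1}rk mxrankM_maxr.
have rK : \rank (kermx A) = 1%N by rewrite mxrank_ker rA subSnn.
have wK : (w <= kermx A)%MS by apply/sub_kermxP.
have Kw : (kermx A <= w)%MS by rewrite -(mxrank_leqif_sup wK).2 rK rank_rV w0.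
have zK : (z <= kermx A)%MS by apply/sub_kermxP.
apply/sub_rVP; exact: submx_trans zK Kw.
Qed.

Theorem lemma4 (C : numClosedFieldType) (n : nat) (d : 'I_n -> nat)
  (f : hsys C d) (x y : 'rV[C]_n.+1) :
  x != 0 -> y != 0 ->
  \rank (perp x *m Dsys f x) = n ->
  forall w : 'rV[C]_n.+1, w != 0 -> w *m Dsys f x = 0 ->
  let costh := cosR x w in
  forall v u : 'rV[C]_n.+1,
    hdot v y = 0 -> hdot u x = 0 -> u *m Dsys f x = v *m Dsys f x ->
    costh * vnorm u <= (costh + dP x y * sin_of_cos costh) * vnorm v.
Proof.
move=> x0 y0 rk w w0 wA costh v u vy ux uvA.
have Xp := vnorm_gt0 x x0; have Yp := vnorm_gt0 y y0; have Wp := vnorm_gt0 w w0.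
set X := vnorm x in Xp *; set Y := vnorm y in Yp *; set W := vnorm w in Wp *.
set V := vnorm v; set U := vnorm u.
have XnZ : X != 0 by rewrite gt_eqF.
have YnZ : Y != 0 by rewrite gt_eqF.
have WnZ : W != 0 by rewrite gt_eqF.
have hxx0 : hdot x x != 0 by rewrite -vnorm_sq expf_neq0.
set a := hdot v x; set b := hdot w x; set g := hdot x y.
have hc : costh = `|b| / (X * W) by rewrite /costh /cosR [hdot x w]hdotC norm_conjC.
set s := sin_of_cos costh.
set dp := dP x y.
set r3 := w - (b / hdot x x) *: x.
have e3 : hdot r3 r3 = W ^+ 2 * (1 - costh ^+ 2).
  rewrite /r3 pyth // -/b -[hdot w w]vnorm_sq -[hdot x x]vnorm_sq hc -/X -/W.
  have [B ->] : exists B : C, `|b| = B by eexists.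
  by field; rewrite WnZ XnZ.
have s2 : s ^+ 2 = 1 - costh ^+ 2 by rewrite /s /sin_of_cos sqrtCK.
have sge0 : 0 <= s.
  rewrite /s /sin_of_cos sqrtC_ge0 -(pmulr_rge0 _ (exprn_gt0 2 Wp)) -e3.
  exact: hdot_ge0.
have n3 : vnorm r3 = W * s.
  apply: vnorm_from_sq; first exact: mulr_ge0 (ltW Wp) sge0.
  by rewrite exprMn s2 e3.
set r2 := x - (g / hdot y y) *: y.
have hyy0 : hdot y y != 0 by rewrite -vnorm_sq expf_neq0.
have e2 : hdot r2 r2 = X ^+ 2 * (1 - cosR x y ^+ 2).
  rewrite /r2 pyth // /cosR -/g -[hdot y y]vnorm_sq -[hdot x x]vnorm_sq -/X -/Y.
  have [G ->] : exists G : C, `|g| = G by eexists.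
  by field; rewrite YnZ XnZ.
have d2 : dp ^+ 2 = 1 - cosR x y ^+ 2 by rewrite /dp /dP /sin_of_cos sqrtCK.
have dge0 : 0 <= dp.
  rewrite /dp /dP /sin_of_cos sqrtC_ge0 -(pmulr_rge0 _ (exprn_gt0 2 Xp)) -e2.
  exact: hdot_ge0.
have n2 : vnorm r2 = X * dp.
  apply: vnorm_from_sq; first exact: mulr_ge0 (ltW Xp) dge0.
  by rewrite exprMn d2 e2.
have av : a = hdot v r2 by rewrite /r2 -scaleNr hdotDr hdotZr vy mulr0 addr0.
have aB : `|a| <= V * (X * dp) by rewrite av -n2; exact: CS.
have cge0 : 0 <= costh.
  by rewrite hc divr_ge0 ?mulr_ge0 ?vnorm_ge0.
have [b0 | b0] := eqVneq b 0.
  have -> : costh = 0 by rewrite hc b0 normr0 mul0r.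
  by rewrite mul0r add0r mulr_ge0 ?mulr_ge0 ?vnorm_ge0.
have [lam hl] : exists lam, u - v = lam *: w.
  by apply: ker1 rk w0 wA _; rewrite mulmxBl uvA subrr.
have hu : u = v + lam *: w by rewrite -hl addrC subrK.
have lb : lam * b = - a.
  by move: ux; rewrite hu hdotDl hdotZl -/a -/b addrC => /eqP; rewrite addr_eq0 => /eqP.
have lamE : lam = - a / b by rewrite -lb mulfK.
set r1 := v - (a / hdot x x) *: x.
have n1 : vnorm r1 <= V.
  rewrite -(ler_pXn2r (_ : 0 < 2)%N) ?nnegrE ?vnorm_ge0 // vnorm_sq /r1 pyth //.
  by rewrite vnorm_sq lerBlDr lerDl divr_ge0 ?exprn_ge0 ?hdot_ge0.
have decomp : u = r1 + lam *: r3.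
  rewrite hu; apply/rowP => k; rewrite !mxE lamE -/a -/b.
  have [p ->] : exists p : C, v 0 k = p by eexists.
  have [q ->] : exists q : C, w 0 k = q by eexists.
  have [r ->] : exists r : C, x 0 k = r by eexists.
  exact: aux_decomp.
have nu : U <= V + `|lam| * (W * s).
  rewrite /U decomp; apply: le_trans (vnormD _ _) _.
  by rewrite vnormZ n3 lerD2r n1.
apply: le_trans (ler_wpM2l cge0 nu) _.
have -> : costh * (V + `|lam| * (W * s)) = costh * V + (`|a| * s) / X.
  rewrite hc lamE normrM normrN normfV.
  have bnZ : `|b| != 0 by rewrite normr_eq0.
  move: bnZ; have [B ->] : exists B : C, `|b| = B by eexists.
  have [A ->] : exists A : C, `|a| = A by eexists.
  by move=> bnZ; field; rewrite XnZ WnZ bnZ.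
apply: (@le_trans _ _ (costh * V + (V * (X * dp)) * s / X)).
  by rewrite lerD2l ler_wpM2r ?invr_ge0 ?vnorm_ge0 // ler_wpM2r.
have -> : costh * V + V * (X * dp) * s / X = (costh + dp * s) * V.
  by field; rewrite XnZ.
by [].
Qed.
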